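(* Consider a $k$-party quantum communication protocol $\mathcal{P}=(U_1^{p_1}(x_{p_1}),\dots,U_r^{p_r}(x_{p_r}))$. The final state of $\mathcal{P}$ on input $x_1\in\mathcal{X}_1,\dots,x_k\in\mathcal{X}_k$ can be written as \[\sum_{i\in S}a_i^1(x_1)\,a_i^2(x_2)\cdots a_i^k(x_k)\,\ket{A_i^1(x_1)}\ket{A_i^2(x_2)}\cdots\ket{A_i^k(x_k)}\ket{f(i)},\] where $S=\{0,1\}^{C(\mathcal{P})}$, each $a_i^p(x_p)$ is a complex number depending only on $i$ and $x_p$, each $\ket{A_i^p(x_p)}$ is a unit vector in $H_p$ depending only on $i$ and $x_p$, and $f:S\to\overline{H}$ is a function (independent of the inputs) mapping each $i$ to a state in $\overline{H}$.
   Context: $k$-party quantum communication model: players $P_1,\dots,P_k$, Hilbert space (of qubits) $H=H_1\otimes\cdots\otimes H_k\otimes\overline{H}$ with $H_i$ private to $P_i$ and $\overline{H}$ the shared channel; $P_i$ receives $x_i\in\mathcal{X}_i$. A protocol is a sequence of unitaries $(U_1^{p_1}(x_{p_1}),\dots,U_r^{p_r}(x_{p_r}))$, $U_j^{p_j}(x_{p_j})$ depending only on $x_{p_j}$ and acting only on $H_{p_j}\otimes\overline{H_j}$, where $\overline{H_j}$ is spanned by some qubits of $\overline{H}$; the sequences $p_1,\dots,p_r$ and $\overline{H_1},\dots,\overline{H_r}$ are fixed independently of the inputs. The initial state is $\ket{0}$ and the final state is $U_r^{p_r}(x_{p_r})\cdots U_1^{p_1}(x_{p_1})\ket{0}$.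 Communication complexity $C(\mathcal{P})=\sum_{j=1}^r\log(\dim\overline{H_j})$. *)

(* Defs.v *)
From HB Require Import structures.
From mathcomp Require Import all_boot all_order all_algebra.
Set Implicit Arguments. Unset Strict Implicit. Unset Printing Implicit Defensive.
Import Order.TTheory GRing.Theory Num.Theory.
Local Open Scope ring_scope.

(* Scalars: an arbitrary numeric algebraically closed field C (e.g. complex
   numbers); conjugation is x^*.
   Player p : 'I_k owns n p qubits: H_p has computational basis
   [qubits n p] = {ffun 'I_(n p) -> bool}.
   The shared channel has m qubits: basis [chan m] = {ffun 'I_m -> bool}.
   A vector of H = H_1 (x) ... (x) H_k (x) Hbar is a function
   (forall p, qubits (n p)) -> chan m -> C (coordinates in the product basis). *)

Definition qubits (d : nat) := {ffun 'I_d -> bool}.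
Definition chan (m : nat) := {ffun 'I_m -> bool}.

Definition gstate (C : Type) (k : nat) (n : 'I_k -> nat) (m : nat) :=
  (forall p : 'I_k, qubits (n p)) -> chan m -> C.

(* The subspace Hbar_j spanned by the channel qubits in Q : {set 'I_m};
   its basis is indexed by assignments of bits to the qubits of Q. *)
Definition locchan (m : nat) (Q : {set 'I_m}) := {ffun {q : 'I_m | q \in Q} -> bool}.

Definition restr (m : nat) (Q : {set 'I_m}) (c : chan m) : locchan Q :=
  [ffun q => c (val q)].

(* A unitary on a finite-dimensional space with basis T, given by its matrix
   entries U w y = <w| U |y>: U^* U = I. *)
Definition unitary (C : numClosedFieldType) (T : finType) (U : T -> T -> C) :=
  forall y z : T, \sum_(w : T) (U w y)^* * U w z = (y == z)%:R.

(* Apply a unitary V acting on H_p (x) Hbar_Q (identity on the other factors). *)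
Definition apply_local (C : numClosedFieldType) (k : nat) (n : 'I_k -> nat)
  (m : nat) (p : 'I_k) (Q : {set 'I_m})
  (V : qubits (n p) * locchan Q -> qubits (n p) * locchan Q -> C)
  (psi : gstate C n m) : gstate C n m :=
  fun b c =>
    \sum_(b' : qubits (n p))
      \sum_(c' : chan m | [forall q : 'I_m, (q \notin Q) ==> (c' q == c q)])
        V (b p, restr Q c) (b', restr Q c') * psi (dfwith b b') c'.

(* A protocol: r steps; step j is performed by player pl j on the channel
   qubits Q j, with unitary U j (x_{pl j}) depending only on that player's input. *)
Record protocol (C : numClosedFieldType) (k : nat) (n : 'I_k -> nat) (m : nat)
    (X : 'I_k -> Type) := Protocol {
  nsteps : nat;
  pl : 'I_nsteps -> 'I_k;
  Qs : 'I_nsteps -> {set 'I_m};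
  U : forall j : 'I_nsteps, X (pl j) ->
        qubits (n (pl j)) * locchan (Qs j) -> qubits (n (pl j)) * locchan (Qs j) -> C;
  U_unitary : forall (j : 'I_nsteps) (x : X (pl j)), unitary (U x)
}.

Definition init_state (C : numClosedFieldType) (k : nat) (n : 'I_k -> nat) (m : nat)
  : gstate C n m :=
  fun b c => ([forall p, b p == [ffun => false]] && (c == [ffun => false]))%:R.

Definition final_state (C : numClosedFieldType) (k : nat) (n : 'I_k -> nat) (m : nat)
  (X : 'I_k -> Type) (P : protocol C n m X) (x : forall p, X p) : gstate C n m :=
  foldl (fun psi j => apply_local (U (x (pl j))) psi) (@init_state C k n m)
        (enum 'I_(nsteps P)).

(* Communication complexity: sum_j log2 dim Hbar_j = sum_j #|Q_j|. *)
Definition comm_complexity (C : numClosedFieldType) (k : nat) (n : 'I_k -> nat)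
  (m : nat) (X : 'I_k -> Type) (P : protocol C n m X) : nat :=
  (\sum_(j < nsteps P) #|Qs j|)%N.

Definition unit_vec (C : numClosedFieldType) (T : finType) (v : T -> C) :=
  \sum_(t : T) `|v t| ^+ 2 = 1.

(* Main.v *)
Require Import Defs.
From HB Require Import structures.
From mathcomp Require Import all_boot all_order all_algebra.
From mathcomp Require Import ring.
Import Order.TTheory GRing.Theory Num.Theory.
Local Open Scope ring_scope.

Lemma sum_delta (C : numClosedFieldType) (T : finType) (P : pred T) (F : T -> C) t0 :
  \sum_(t | P t) F t * (t == t0)%:R = (P t0)%:R * F t0.
Proof.
rewrite big_mkcond (bigD1 t0) //= eqxx mulr1 big1 ?addr0.
  by case: (P t0); rewrite ?mul1r ?mul0r.
by move=> t /negbTE ->; rewrite mulr0; case: (P t).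
Qed.

Section Norm.
Variable C : numClosedFieldType.
Variable T : finType.

Definition nrm (v : T -> C) := sqrtC (\sum_t `|v t| ^+ 2).
Definition nvec (t0 : T) (v : T -> C) : T -> C :=
  if nrm v == 0 then (fun t => (t == t0)%:R) else (fun t => v t / nrm v).

Lemma nrm_ge0 v : 0 <= nrm v.
Proof. by rewrite sqrtC_ge0 sumr_ge0 // => t _; rewrite exprn_ge0. Qed.

Lemma nvec_unit t0 v : unit_vec (nvec t0 v).
Proof.
rewrite /unit_vec /nvec; case: eqP => [_|/eqP nz].
  rewrite (bigD1 t0) //= eqxx normr1 expr1n big1 ?addr0 // => t /negbTE ->.
  by rewrite normr0 expr0n.
have s0 : \sum_t `|v t| ^+ 2 != 0 by rewrite -sqrtC_eq0.
under eq_bigr => t _ do rewrite normf_div (ger0_norm (nrm_ge0 v)) expr_div_n.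
by rewrite -mulr_suml /nrm sqrtCK mulfV.
Qed.

Lemma nvecE t0 v t : v t = nrm v * nvec t0 v t.
Proof.
rewrite /nvec; case: eqP => [e|/eqP nz]; last by rewrite mulrC divfK.
rewrite e mul0r; move: e => /eqP; rewrite sqrtC_eq0 => /eqP e.
have := psumr_eq0P (fun t _ => exprn_ge0 2 (normr_ge0 (v t))) e.
by move=> /(_ t isT) /eqP; rewrite sqrf_eq0 normr_eq0 => /eqP.
Qed.
End Norm.

Section Step.
Variables (C : numClosedFieldType) (k : nat) (n : 'I_k -> nat) (m : nat) (X : 'I_k -> Type).

Definition repr (I : finType) (S : (forall p, X p) -> gstate C n m) :=
 exists (A : forall p : 'I_k, I -> X p -> qubits (n p) -> C) (g : I -> chan m),
 forall x b c, S x b c = \sum_(i : I) (\prod_(p < k) A p i (x p) (b p)) * (c == g i)%:R.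

Definition agree (Q : {set 'I_m}) (c' c : chan m) := [forall q : 'I_m, (q \notin Q) ==> (c' q == c q)].

Definition merge (Q : {set 'I_m}) (g : chan m) (d : locchan Q) : chan m :=
  [ffun q => if (insub q : option {q : 'I_m | q \in Q}) is Some s then d s else g q].

Lemma merge_eq (Q : {set 'I_m}) (g : chan m) (d : locchan Q) (c : chan m) : (c == merge Q g d) = agree Q g c && (d == restr Q c).
Proof.
apply/idP/idP.
  move/eqP ->; apply/andP; split.
    by apply/forallP => q; apply/implyP => Hq; rewrite ffunE insubN.
  by apply/eqP/ffunP => s; rewrite !ffunE valK.
move=> /andP[/forallP H /eqP ->]; apply/eqP/ffunP => q; rewrite ffunE.
case: insubP => [s Hq <-|Hq]; first by rewrite ffunE.
by apply/esym/eqP; apply: (implyP (H q)); rewrite Hq.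
Qed.

Lemma repr_step (I : finType) S p0 (Q : {set 'I_m})
  (V : X p0 -> qubits (n p0) * locchan Q -> qubits (n p0) * locchan Q -> C) :
  repr I S -> repr (I * locchan Q)%type (fun x => apply_local (V (x p0)) (S x)).
Proof.
move=> [A [g E]].
pose v (i : I) (d : locchan Q) (xp : X p0) (w : qubits (n p0)) :=
  \sum_(b' : qubits (n p0)) V xp (w, d) (b', restr Q (g i)) * A p0 i xp b'.
pose T := fun p => (I * locchan Q)%type -> X p -> qubits (n p) -> C.
exists (fun p => @dfwith 'I_k T (fun p id xp => A p id.1 xp) p0 (fun id xp w => v id.1 id.2 xp w) p).
exists (fun id => merge Q (g id.1) id.2).
move=> x b c.
pose M := \sum_(i : I) (agree Q (g i) c)%:R * (\prod_(p < k | p != p0) A p i (x p) (b p))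
           * v i (restr Q c) (x p0) (b p0).
transitivity M.
  rewrite /apply_local.
  under eq_bigr => b' _.
    under eq_bigr => c' _ do rewrite E mulr_sumr.
    rewrite exchange_big /=.
    under eq_bigr => i _.
      under eq_bigr => c' _ do rewrite mulrA.
      rewrite sum_delta (bigD1 p0) //= dfwith_in.
      under eq_bigr => p Hp do rewrite dfwith_out 1?eq_sym //.
      over.
    over.
  rewrite exchange_big /=; apply: eq_bigr => i _.
  rewrite /v mulr_sumr; apply: eq_bigr => b' _.
  have -> : [forall q, (q \notin Q) ==> (g i q == c q)] = agree Q (g i) c by [].
  by rewrite mulrA; ring.
have PB : forall (F : I * locchan Q -> C), \sum_(id : I * locchan Q) F id = \sum_(i : I) \sum_(d : locchan Q) F (i, d).
  by move=> F; rewrite pair_bigA; apply: eq_bigr => -[].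
rewrite PB /=.
apply: eq_bigr => i _.
under [RHS]eq_bigr => d _.
  rewrite (bigD1 p0) //= dfwith_in.
  under eq_bigr => p Hp do rewrite dfwith_out 1?eq_sym //.
  rewrite merge_eq -mulnb natrM.
  rewrite mulrA.
  over.
rewrite /= sum_delta /=; ring.
Qed.

Lemma prod_nat_bool (B : 'I_k -> bool) : \prod_(p < k) ((B p)%:R : C) = ([forall p, B p])%:R.
Proof.
case: (boolP [forall p, B p]) => [/forallP H|/forallPn [p Hp]].
  by rewrite big1 // => i _; rewrite H.
by rewrite (bigD1 p) //= (negbTE Hp) mul0r.
Qed.

Lemma repr_init : repr unit (fun _ => @init_state C k n m).
Proof.
exists (fun p _ _ w => (w == [ffun => false])%:R), (fun _ => [ffun => false]).
move=> x b c; rewrite /init_state (bigD1 tt) //= [X in _ + X]big_pred0 ?addr0; last by case.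
rewrite prod_nat_bool.
by case: [forall p, _]; case: (c == _); rewrite ?mul1r ?mul0r ?mulr0 ?mulr1.
Qed.

Variable P : protocol C n m X.

Lemma repr_fold (s : seq 'I_(nsteps P)) (I : finType) S : repr I S ->
  exists I' : finType, #|I'| = (#|I| * 2 ^ (\sum_(j <- s) #|Qs j|))%N /\
  repr I' (fun x => foldl (fun psi j => apply_local (U (x (pl j))) psi) (S x) s).
Proof.
elim: s I S => [|j s IH] I S HS.
  by exists I; rewrite big_nil expn0 muln1.
have [I' [cI' HI']] := IH _ _ (@repr_step I S (pl j) (Qs j) (@U _ _ _ _ _ P j) HS).
exists I'; split => //.
by rewrite cI' big_cons expnD mulnA card_prod card_ffun card_bool card_sig.
Qed.
End Step.

Theorem mainTheorem3 (C : numClosedFieldType) (k : nat) (n : 'I_k -> nat) (m : nat)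
    (X : 'I_k -> Type) (P : protocol C n m X) :
  exists (a : forall p : 'I_k, {ffun 'I_(comm_complexity P) -> bool} -> X p -> C)
         (A : forall p : 'I_k, {ffun 'I_(comm_complexity P) -> bool} -> X p ->
                qubits (n p) -> C)
         (f : {ffun 'I_(comm_complexity P) -> bool} -> chan m -> C),
    [/\ forall (p : 'I_k) (i : {ffun 'I_(comm_complexity P) -> bool}) (xp : X p),
          unit_vec (A p i xp),
        forall i : {ffun 'I_(comm_complexity P) -> bool}, unit_vec (f i)
      & forall (x : forall p : 'I_k, X p) (b : forall p : 'I_k, qubits (n p)) (c : chan m),
          final_state P x b c =
          \sum_(i : {ffun 'I_(comm_complexity P) -> bool})
             (\prod_(p < k) a p i (x p)) * (\prod_(p < k) A p i (x p) (b p)) * f i c].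
Proof.
have [I' [cI' [A [g E]]]] := @repr_fold C k n m X P (enum 'I_(nsteps P)) _ _ (@repr_init C k n m X).
have e : #|{ffun 'I_(comm_complexity P) -> bool}| = #|I'|.
  rewrite cI' card_ffun card_bool card_ord card_unit mul1n big_enum /=.
  by [].
pose h := fun t : {ffun 'I_(comm_complexity P) -> bool} => enum_val (cast_ord e (enum_rank t)).
pose h' := fun i : I' => enum_val (cast_ord (esym e) (enum_rank i)).
have hb : bijective h.
  exists h' => t; rewrite /h /h' enum_valK ?cast_ordK ?cast_ordKV enum_rankK //.
exists (fun p i xp => @nrm C _ (A p (h i) xp)),
       (fun p i xp => @nvec C _ [ffun => false] (A p (h i) xp)),
       (fun i c => (c == g (h i))%:R).
split.
- by move=> p i xp; apply: nvec_unit.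
- move=> i; rewrite /unit_vec (bigD1 (g (h i))) //= eqxx normr1 expr1n big1 ?addr0 //.
  by move=> t /negbTE ->; rewrite normr0 expr0n.
move=> x b c.
rewrite /final_state E (reindex h) /=; last by apply: onW_bij.
apply: eq_bigr => i _; rewrite -big_split /=; congr (_ * _).
by apply: eq_bigr => p _; apply: nvecE.
Qed.
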